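(* Let $T$ be a positive integer, let $N=(N_l)_{0\le l\le T}$ satisfy $N_0=0$ with increments $N_{l+1}-N_l$ independent Poisson random variables with parameters $\gamma_l\ge0$, $0\le l\le T-1$, let $\mathfrak{F}=(\mathfrak{F}_k)$ be the natural augmented filtration of $N$, $I_k=I_0(-1)^{N_k}$ with $I_0\in\{-1,1\}$ deterministic, and for $1\le l\le T$ let $u_l=\frac12(1+e^{-2\gamma_{l-1}})$, $v_l=\frac12(1-e^{-2\gamma_{l-1}})$. For $0\le k\le T$ define $$Q_k=\sup_{\tau\in\mathcal{T}^k}\mathbb{E}_k\Big[\sum_{\ell=k+1}^{T}\big(\mathbf{1}_{I_\ell=-1}-\mathbf{1}_{I_\ell=1}\big)\mathbf{1}_{\ell\le\tau}\Big],$$ where $\mathcal{T}^k$ is the set of $\mathfrak{F}$-stopping times with values in $\{k,\dots,T\}$. Then $Q_k=Q(k,I_k)$, where $Q:\{0,\dots,T\}\times\{1,-1\}\to\mathbb{R}$ is given by $Q(T,\pm1)=0$ and, for $0\le k<T$, $$Q(k,-1)=e^{-2\gamma_k}+v_{k+1}Q(k+1,1)+u_{k+1}Q(k+1,-1)>0,$$ $$Q(k,1)=\max\big(0,\,-e^{-2\gamma_k}+u_{k+1}Q(k+1,1)+v_{k+1}Q(k+1,-1)\big).$$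
   Context: $\mathbb{E}_k$ denotes conditional expectation given $\mathfrak{F}_k$. *)

(* Defs.v *)
From Stdlib Require Import Reals Lra Lia List Arith.
From Coquelicot Require Import Coquelicot.
Open Scope R_scope.

(* Canonical sample space: omega i = N_{i+1} - N_i, the i-th increment
   (only coordinates i < T are relevant). *)
Definition Omega := nat -> nat.

Definition poisson_pmf (g : R) (n : nat) : R :=
  exp (- g) * g ^ n / INR (fact n).

Definition upd (w : Omega) (s n : nat) : Omega :=
  fun i => if Nat.eqb i s then n else w i.

(* Integrate out coordinates s, s+1, ..., s+m-1 against the independent
   Poisson(gamma_i) laws (iterated series = product measure). *)
Fixpoint ExpFrom (gamma : nat -> R) (m s : nat) (f : Omega -> R) (w : Omega) : R :=
  match m with
  | O => f w
  | S m' => Series (fun n => poisson_pmf (gamma s) n *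
                             ExpFrom gamma m' (S s) f (upd w s n))
  end.

Definition Expect (gamma : nat -> R) (T : nat) (f : Omega -> R) : R :=
  ExpFrom gamma T 0 f (fun _ => 0%nat).

Fixpoint Nproc (k : nat) (w : Omega) : nat :=
  match k with O => 0%nat | S k' => (Nproc k' w + w k')%nat end.

Definition Iproc (I0 : R) (k : nat) (w : Omega) : R := I0 * (-1) ^ (Nproc k w).

Definition ind (b : bool) : R := if b then 1 else 0.

(* tau is a stopping time of the natural filtration of N with values in
   {k, ..., T}: {tau <= j} is determined by N_0..N_j, i.e. by the first
   j increments. *)
Definition stopping_time_in (T k : nat) (tau : Omega -> nat) : Prop :=
  (forall w, (k <= tau w <= T)%nat) /\
  (forall (j : nat) (w w' : Omega),
      (forall i, (i < j)%nat -> w i = w' i) ->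
      ((tau w <= j)%nat <-> (tau w' <= j)%nat)).

Definition payoff (I0 : R) (T k : nat) (tau : Omega -> nat) (w : Omega) : R :=
  fold_right Rplus 0
    (map (fun l =>
            ((if Req_EM_T (Iproc I0 l w) (-1) then 1 else 0)
             - (if Req_EM_T (Iproc I0 l w) 1 then 1 else 0))
            * ind (Nat.leb l (tau w)))
         (seq (S k) (T - k))).

(* Indicator of the atom {N_1..N_k determined by the history h} of F_k,
   i.e. {omega i = h i for i < k}. *)
Definition atom (k : nat) (h : Omega) (w : Omega) : R :=
  ind (forallb (fun i => Nat.eqb (w i) (h i)) (seq 0 k)).

(* Conditional expectation E_k[X] on the atom of F_k given by h
   (F_k is generated by countably many atoms). *)
Definition CondExp (gamma : nat -> R) (T k : nat) (X : Omega -> R) (h : Omega) : R :=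
  Expect gamma T (fun w => X w * atom k h w) / Expect gamma T (atom k h).

(* The function Q : {0..T} x {1,-1} -> R; Qaux m = (Q(T-m,1), Q(T-m,-1)). *)
Fixpoint Qaux (gamma : nat -> R) (T m : nat) : R * R :=
  match m with
  | O => (0, 0)
  | S m' =>
      let k := (T - S m')%nat in
      let p := Qaux gamma T m' in
      let e := exp (-2 * gamma k) in
      let u := (1 + e) / 2 in
      let v := (1 - e) / 2 in
      (Rmax 0 (- e + u * fst p + v * snd p),
       e + v * fst p + u * snd p)
  end.

Definition Qfun (gamma : nat -> R) (T k : nat) (s : R) : R :=
  let p := Qaux gamma T (T - k) in
  if Req_EM_T s 1 then fst p else snd p.

(* Main.v *)
Require Import Defs.
From Stdlib Require Import Reals Lra Lia List Arith FunctionalExtensionality.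
From Coquelicot Require Import Coquelicot.
Open Scope R_scope.


Lemma exp_series (x : R) : is_series (fun n => x ^ n / INR (fact n)) (exp x).
Proof.
  pose proof (is_exp_Reals x) as H. unfold is_pseries in H.
  eapply is_series_ext; [|exact H].
  intro n. simpl. rewrite pow_n_pow. unfold scal; simpl. unfold mult; simpl. unfold Rdiv. ring.
Qed.

Lemma pois_sum (g : R) : is_series (poisson_pmf g) 1.
Proof.
  replace 1 with (exp (-g) * exp g).
  2:{ rewrite <- exp_plus. replace (-g+g) with 0 by ring. apply exp_0. }
  pose proof (is_series_scal_l (exp (-g)) _ _ (exp_series g)) as H.
  eapply is_series_ext; [|exact H].
  intro n. unfold poisson_pmf. simpl. unfold scal; simpl; unfold mult; simpl. unfold Rdiv; ring.
Qed.

Lemma pois_alt (g : R) : is_series (fun n => poisson_pmf g n * (-1) ^ n) (exp (-2 * g)).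
Proof.
  replace (exp (-2*g)) with (exp (-g) * exp (-g)).
  2:{ rewrite <- exp_plus. f_equal; ring. }
  pose proof (is_series_scal_l (exp (-g)) _ _ (exp_series (-g))) as H.
  eapply is_series_ext; [|exact H].
  intro n. unfold poisson_pmf. simpl. unfold scal; simpl; unfold mult; simpl.
  replace (-g) with ((-1) * g) at 2 by ring. rewrite Rpow_mult_distr. unfold Rdiv; ring.
Qed.

Lemma pmf_nonneg g n : 0 <= g -> 0 <= poisson_pmf g n.
Proof.
  intro Hg. unfold poisson_pmf. unfold Rdiv. apply Rmult_le_pos.
  apply Rmult_le_pos. left; apply exp_pos. apply pow_le; auto.
  left; apply Rinv_0_lt_compat, INR_fact_lt_0.
Qed.

Lemma ex_pmf_bounded g (a : nat -> R) M : 0 <= g -> (forall n, Rabs (a n) <= M) ->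
  ex_series (fun n => poisson_pmf g n * a n).
Proof.
  intros Hg Ha. apply (@ex_series_le R_AbsRing R_CompleteNormedModule _ (fun n => poisson_pmf g n * M)).
  - intro n. change norm with Rabs. simpl. rewrite Rabs_mult, (Rabs_pos_eq (poisson_pmf g n)) by (apply pmf_nonneg; auto).
    apply Rmult_le_compat_l; auto. apply pmf_nonneg; auto.
  - exists (1 * M). apply (is_series_scal_r M (poisson_pmf g) 1), pois_sum.
Qed.

Lemma Series_pmf_bound g (a : nat -> R) M : 0 <= g -> (forall n, Rabs (a n) <= M) ->
  Rabs (Series (fun n => poisson_pmf g n * a n)) <= M.
Proof.
  intros Hg Ha.
  assert (HM : forall n, Rabs (poisson_pmf g n * a n) <= poisson_pmf g n * M).
  { intro n. rewrite Rabs_mult, (Rabs_pos_eq (poisson_pmf g n)) by (apply pmf_nonneg; auto).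
    apply Rmult_le_compat_l; auto. apply pmf_nonneg; auto. }
  assert (E1 : ex_series (fun n => poisson_pmf g n * M)).
  { exists (1 * M). apply (is_series_scal_r M (poisson_pmf g) 1), pois_sum. }
  eapply Rle_trans. apply Series_Rabs.
  { apply (@ex_series_le R_AbsRing R_CompleteNormedModule _ (fun n => poisson_pmf g n * M)); auto.
    intro n. change norm with Rabs. simpl. rewrite Rabs_Rabsolu. apply HM. }
  eapply Rle_trans. apply Series_le; [|exact E1]. intro n; split; [apply Rabs_pos| apply HM].
  rewrite Series_scal_r, (is_series_unique _ _ (pois_sum g)). lra.
Qed.

Lemma Series_pmf_mono g (a b : nat -> R) M : 0 <= g -> (forall n, Rabs (a n) <= M) ->
  (forall n, Rabs (b n) <= M) -> (forall n, a n <= b n) ->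
  Series (fun n => poisson_pmf g n * a n) <= Series (fun n => poisson_pmf g n * b n).
Proof.
  intros Hg Ha Hb Hab.
  assert (Ea := ex_pmf_bounded g a M Hg Ha).
  assert (Eb := ex_pmf_bounded g b M Hg Hb).
  assert (0 <= Series (fun n => poisson_pmf g n * b n - poisson_pmf g n * a n)).
  { assert (Z : Series (fun _ : nat => 0) = 0).
    { rewrite (Series_ext (fun _ => 0) (fun n => 0 * 0)) by (intro; ring). rewrite Series_scal_l; ring. }
    rewrite <- Z.
    apply Series_le. intro n; split; [lra|]. pose proof (pmf_nonneg g n Hg). pose proof (Hab n). nra.
    pose proof (ex_series_minus _ _ Eb Ea) as Em. exact Em. }
  rewrite Series_minus in H; auto. lra.
Qed.


Definition agree_out (s m : nat) (w w' : Omega) :=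
  forall i, (i < s \/ s + m <= i)%nat -> w' i = w i.

Lemma EF_ext (gamma : nat -> R) m : forall s f g w,
  (forall w', agree_out s m w w' -> f w' = g w') ->
  ExpFrom gamma m s f w = ExpFrom gamma m s g w.
Proof.
  induction m as [|m IH]; intros s f g w H; simpl.
  - apply H. intros i _; reflexivity.
  - apply Series_ext. intro n. f_equal. apply IH. intros w' Hw'. apply H.
    intros i Hi. rewrite Hw' by lia. unfold upd.
    destruct (Nat.eqb_spec i s); [lia|reflexivity].
Qed.

Lemma EF_scal (gamma : nat -> R) m : forall s f c w,
  ExpFrom gamma m s (fun w => c * f w) w = c * ExpFrom gamma m s f w.
Proof.
  induction m as [|m IH]; intros s f c w; simpl; [reflexivity|].
  rewrite <- Series_scal_l. apply Series_ext. intro n. rewrite IH. ring.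
Qed.

Lemma EF_const (gamma : nat -> R) m : forall s c w, ExpFrom gamma m s (fun _ => c) w = c.
Proof.
  induction m as [|m IH]; intros s c w; simpl; [reflexivity|].
  rewrite (Series_ext _ (fun n => poisson_pmf (gamma s) n * c)) by (intro; rewrite IH; reflexivity).
  rewrite Series_scal_r, (is_series_unique _ _ (pois_sum _)). ring.
Qed.

Lemma EF_split (gamma : nat -> R) a : forall b s f w,
  ExpFrom gamma (a + b) s f w = ExpFrom gamma a s (ExpFrom gamma b (s + a) f) w.
Proof.
  induction a as [|a IH]; intros b s f w; simpl.
  - rewrite Nat.add_0_r. reflexivity.
  - apply Series_ext. intro n. rewrite IH. replace (S s + a)%nat with (s + S a)%nat by lia. reflexivity.
Qed.

Definition gnn (gamma : nat -> R) (s m : nat) := forall i, (s <= i < s + m)%nat -> 0 <= gamma i.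

Lemma EF_bound (gamma : nat -> R) m : forall s f M, gnn gamma s m -> (forall w, Rabs (f w) <= M) ->
  forall w, Rabs (ExpFrom gamma m s f w) <= M.
Proof.
  induction m as [|m IH]; intros s f M Hg Hf w; simpl; [apply Hf|].
  apply Series_pmf_bound. apply Hg; lia.
  intro n. apply IH; auto. intros i Hi; apply Hg; lia.
Qed.

Lemma EF_plus (gamma : nat -> R) m : forall s f g Mf Mg, gnn gamma s m -> (forall w, Rabs (f w) <= Mf) ->
  (forall w, Rabs (g w) <= Mg) ->
  forall w, ExpFrom gamma m s (fun w => f w + g w) w = ExpFrom gamma m s f w + ExpFrom gamma m s g w.
Proof.
  induction m as [|m IH]; intros s f g Mf Mg Hg Hf Hgb w; simpl; [reflexivity|].
  assert (Hg' : gnn gamma (S s) m) by (intros i Hi; apply Hg; lia).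
  rewrite <- Series_plus.
  - apply Series_ext. intro n. rewrite (IH _ f g Mf Mg); auto. ring.
  - apply (ex_pmf_bounded _ _ Mf). apply Hg; lia. intro n. apply EF_bound; auto.
  - apply (ex_pmf_bounded _ _ Mg). apply Hg; lia. intro n. apply EF_bound; auto.
Qed.

Lemma EF_mono1 (gamma : nat -> R) s f g M : 0 <= gamma s -> (forall w, Rabs (f w) <= M) ->
  (forall w, Rabs (g w) <= M) -> (forall w, f w <= g w) ->
  forall w, ExpFrom gamma 1 s f w <= ExpFrom gamma 1 s g w.
Proof.
  intros Hs Hf Hgb Hfg w. simpl. apply (Series_pmf_mono _ _ _ M); auto.
Qed.


Lemma Nproc_ext k : forall w w', (forall i, (i < k)%nat -> w i = w' i) -> Nproc k w = Nproc k w'.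
Proof.
  induction k as [|k IH]; intros w w' H; simpl; auto.
  rewrite (IH w w') by (intros; apply H; lia). rewrite H by lia. reflexivity.
Qed.

Lemma Iproc_ext I0 k w w' : (forall i, (i < k)%nat -> w i = w' i) -> Iproc I0 k w = Iproc I0 k w'.
Proof. intro H. unfold Iproc. rewrite (Nproc_ext k w w' H). reflexivity. Qed.

Lemma pm1 n : (-1) ^ n = 1 \/ (-1) ^ n = -1.
Proof. induction n as [|n IH]; simpl; [left; ring|]. destruct IH as [-> | ->]; [right|left]; ring. Qed.

Lemma Iproc_pm I0 k w : (I0 = 1 \/ I0 = -1) -> Iproc I0 k w = 1 \/ Iproc I0 k w = -1.
Proof.
  intro H. unfold Iproc. destruct (pm1 (Nproc k w)) as [-> | ->]; destruct H as [-> | ->];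
  [left|right|right|left]; ring.
Qed.

Lemma Iproc_upd I0 k w n : Iproc I0 (S k) (upd w k n) = Iproc I0 k w * (-1) ^ n.
Proof.
  unfold Iproc. simpl. rewrite pow_add.
  rewrite (Nproc_ext k (upd w k n) w).
  - unfold upd. rewrite Nat.eqb_refl. ring.
  - intros i Hi. unfold upd. destruct (Nat.eqb_spec i k); [lia|reflexivity].
Qed.

Lemma onestep gamma I0 k (G : R -> R) w :
  ExpFrom gamma 1 k (fun w => G (Iproc I0 (S k) w)) w =
  (1 + exp (-2 * gamma k)) / 2 * G (Iproc I0 k w) + (1 - exp (-2 * gamma k)) / 2 * G (- Iproc I0 k w).
Proof.
  simpl. set (s := Iproc I0 k w).
  set (A := (G s + G (-s)) / 2). set (Bc := (G s - G (-s)) / 2).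
  rewrite (Series_ext _ (fun n => poisson_pmf (gamma k) n * A + Bc * (poisson_pmf (gamma k) n * (-1) ^ n))).
  2:{ intro n. rewrite Iproc_upd. fold s. unfold A, Bc.
      destruct (pm1 n) as [E|E]; rewrite E; [replace (s*1) with s by ring | replace (s * -1) with (-s) by ring]; field. }
  rewrite Series_plus.
  - rewrite Series_scal_r, Series_scal_l, (is_series_unique _ _ (pois_sum _)), (is_series_unique _ _ (pois_alt _)).
    unfold A, Bc. field.
  - exists (1 * A). apply (is_series_scal_r A (poisson_pmf (gamma k)) 1), pois_sum.
  - exists (Bc * exp (-2 * gamma k)). apply (is_series_scal_l Bc _ _ (pois_alt _)).
Qed.

Definition rfun (s : R) : R :=
  (if Req_EM_T s (-1) then 1 else 0) - (if Req_EM_T s 1 then 1 else 0).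

Lemma rfun_1 : rfun 1 = -1.
Proof. unfold rfun. destruct (Req_EM_T 1 (-1)); [lra|]. destruct (Req_EM_T 1 1); lra. Qed.
Lemma rfun_m1 : rfun (-1) = 1.
Proof. unfold rfun. destruct (Req_EM_T (-1) (-1)); [|lra]. destruct (Req_EM_T (-1) 1); lra. Qed.
Lemma rfun_bound s : Rabs (rfun s) <= 1.
Proof. unfold rfun. destruct (Req_EM_T s (-1)), (Req_EM_T s 1); apply Rabs_le; lra. Qed.

Lemma payoff_eq I0 T k tau w :
  payoff I0 T k tau w =
  fold_right Rplus 0 (map (fun l => rfun (Iproc I0 l w) * Defs.ind (Nat.leb l (tau w))) (seq (S k) (T - k))).
Proof. reflexivity. Qed.

Lemma payoff_tau_ext I0 T k tau tau' w : tau w = tau' w -> payoff I0 T k tau w = payoff I0 T k tau' w.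
Proof. intro H. rewrite !payoff_eq, H. reflexivity. Qed.

Lemma fold_zero (F : nat -> R) t len : forall st, (t < st)%nat ->
  fold_right Rplus 0 (map (fun l => F l * Defs.ind (Nat.leb l t)) (seq st len)) = 0.
Proof.
  induction len as [|len IH]; intros st Hst; simpl; [reflexivity|].
  rewrite IH by lia. destruct (Nat.leb_spec st t); [lia|]. unfold Defs.ind; ring.
Qed.

Lemma payoff_zero I0 T k tau w : (tau w <= k)%nat -> payoff I0 T k tau w = 0.
Proof. intro H. rewrite payoff_eq. apply (fold_zero (fun l => rfun (Iproc I0 l w))). lia. Qed.

Lemma payoff_step I0 T k tau w : (k < T)%nat ->
  payoff I0 T k tau w = rfun (Iproc I0 (S k) w) * Defs.ind (Nat.leb (S k) (tau w)) + payoff I0 T (S k) tau w.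
Proof.
  intro H. rewrite !payoff_eq. replace (T - k)%nat with (S (T - S k)) by lia. reflexivity.
Qed.

Lemma fold_bound (F : nat -> R) len : forall st, (forall l, Rabs (F l) <= 1) ->
  Rabs (fold_right Rplus 0 (map F (seq st len))) <= INR len.
Proof.
  induction len as [|len IH]; intros st HF.
  - simpl. rewrite Rabs_R0; lra.
  - cbn [seq map fold_right]. eapply Rle_trans. apply Rabs_triang. rewrite S_INR. specialize (IH (S st) HF). specialize (HF st). lra.
Qed.

Lemma payoff_bound I0 T k tau w : Rabs (payoff I0 T k tau w) <= INR T.
Proof.
  rewrite payoff_eq. eapply Rle_trans. apply fold_bound.
  - intro l. rewrite Rabs_mult. unfold Defs.ind. destruct (Nat.leb l (tau w)).
    + rewrite Rabs_R1, Rmult_1_r. apply rfun_bound.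
    + rewrite Rabs_R0, Rmult_0_r. lra.
  - apply le_INR. lia.
Qed.

Lemma forallb_ext_in {A} (f g : A -> bool) (l : list A) :
  (forall x, In x l -> f x = g x) -> forallb f l = forallb g l.
Proof.
  induction l as [|a l IH]; intro H; simpl; [reflexivity|].
  rewrite H by (left; reflexivity). rewrite IH; auto. intros x Hx; apply H; right; auto.
Qed.

Lemma atom_ext k h w w' : (forall i, (i < k)%nat -> w i = w' i) -> atom k h w = atom k h w'.
Proof.
  intro H. unfold atom. f_equal. apply forallb_ext_in. intros x Hx.
  apply in_seq in Hx. rewrite H by lia. reflexivity.
Qed.

Lemma atom_one k h w : atom k h w <> 0 -> forall i, (i < k)%nat -> w i = h i.
Proof.
  unfold atom, Defs.ind. destruct (forallb _ _) eqn:E; [|lra]. intros _ i Hi.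
  rewrite forallb_forall in E. apply Nat.eqb_eq, E, in_seq. lia.
Qed.

Lemma e_bounds g : 0 <= g -> 0 < exp (-2 * g) <= 1.
Proof.
  intro H. split. apply exp_pos. rewrite <- exp_0.
  destruct (Req_dec g 0) as [->|Hn]. replace (-2*0) with 0 by ring; lra.
  left. apply exp_increasing. lra.
Qed.

Lemma prods e a b : 0 <= e <= 1 -> 0 <= a -> 0 <= b ->
  0 <= (1 - e) / 2 * a /\ 0 <= (1 + e) / 2 * b /\ 0 <= (1 + e) / 2 * a /\ 0 <= (1 - e) / 2 * b.
Proof. intros. repeat split; apply Rmult_le_pos; lra. Qed.

Lemma Qaux_pos gamma T m : (0 < T)%nat -> (forall l, (l < T)%nat -> 0 <= gamma l) ->
  0 <= fst (Qaux gamma T m) /\ 0 <= snd (Qaux gamma T m).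
Proof.
  intros HT Hg. induction m as [|m IH]; simpl; [lra|].
  assert (He := e_bounds (gamma (T - S m)%nat) (Hg (T - S m)%nat ltac:(lia))).
  destruct IH as [IH1 IH2]. split. apply Rmax_l.
  pose proof (prods (exp (-2 * gamma (T - S m)%nat)) _ _ ltac:(lra) IH1 IH2). lra.
Qed.

Lemma Qaux_snd_pos gamma T m : (0 < T)%nat -> (forall l, (l < T)%nat -> 0 <= gamma l) ->
  0 < snd (Qaux gamma T (S m)).
Proof.
  intros HT Hg. pose proof (Qaux_pos gamma T m HT Hg) as [H1 H2]. simpl.
  assert (He := e_bounds (gamma (T - S m)%nat) (Hg (T - S m)%nat ltac:(lia))).
  pose proof (prods (exp (-2 * gamma (T - S m)%nat)) _ _ ltac:(lra) H1 H2). lra.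
Qed.

Lemma Qaux_step gamma T k : (k < T)%nat ->
  Qaux gamma T (T - k) =
  (Rmax 0 (- exp (-2 * gamma k) + (1 + exp (-2 * gamma k)) / 2 * fst (Qaux gamma T (T - S k))
           + (1 - exp (-2 * gamma k)) / 2 * snd (Qaux gamma T (T - S k))),
   exp (-2 * gamma k) + (1 - exp (-2 * gamma k)) / 2 * fst (Qaux gamma T (T - S k))
           + (1 + exp (-2 * gamma k)) / 2 * snd (Qaux gamma T (T - S k))).
Proof.
  intro H. replace (T - k)%nat with (S (T - S k)) by lia. cbn [Qaux].
  replace (T - S (T - S k))%nat with k by lia. reflexivity.
Qed.

Lemma Qfun_1 gamma T k : Qfun gamma T k 1 = fst (Qaux gamma T (T - k)).
Proof. unfold Qfun. destruct (Req_EM_T 1 1); [reflexivity|lra]. Qed.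
Lemma Qfun_m1 gamma T k : Qfun gamma T k (-1) = snd (Qaux gamma T (T - k)).
Proof. unfold Qfun. destruct (Req_EM_T (-1) 1); [lra|reflexivity]. Qed.

Lemma Qfun_nonneg gamma T k s : (0 < T)%nat -> (forall l, (l < T)%nat -> 0 <= gamma l) ->
  0 <= Qfun gamma T k s.
Proof.
  intros HT Hg. pose proof (Qaux_pos gamma T (T - k) HT Hg). unfold Qfun.
  destruct (Req_EM_T s 1); tauto.
Qed.

Lemma Qfun_bound gamma T k s : (0 < T)%nat -> (forall l, (l < T)%nat -> 0 <= gamma l) ->
  Rabs (Qfun gamma T k s) <= fst (Qaux gamma T (T - k)) + snd (Qaux gamma T (T - k)).
Proof.
  intros HT Hg. pose proof (Qaux_pos gamma T (T - k) HT Hg). unfold Qfun.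
  destruct (Req_EM_T s 1); rewrite Rabs_pos_eq; lra.
Qed.

Definition Cfun gamma T k s :=
  (1 + exp (-2 * gamma k)) / 2 * (rfun s + Qfun gamma T (S k) s)
  + (1 - exp (-2 * gamma k)) / 2 * (rfun (- s) + Qfun gamma T (S k) (- s)).

Lemma Q_rec gamma T k s : (0 < T)%nat -> (forall l, (l < T)%nat -> 0 <= gamma l) ->
  (k < T)%nat -> (s = 1 \/ s = -1) -> Qfun gamma T k s = Rmax 0 (Cfun gamma T k s).
Proof.
  intros HT Hg Hk Hs. unfold Cfun.
  pose proof (Qaux_pos gamma T (T - S k) HT Hg) as [P1 P2].
  assert (He := e_bounds (gamma k) (Hg _ Hk)).
  destruct Hs as [-> | ->].
  - rewrite Qfun_1, Qaux_step by auto. cbn [fst].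
    replace (Ropp 1) with (-1) by ring.
    rewrite rfun_1, rfun_m1, Qfun_1, Qfun_m1. f_equal. lra.
  - rewrite Qfun_m1, Qaux_step by auto. cbn [snd].
    replace (- -1) with 1 by ring.
    rewrite rfun_1, rfun_m1, Qfun_1, Qfun_m1. rewrite Rmax_right. lra.
    pose proof (prods (exp (-2 * gamma k)) _ _ ltac:(lra) P1 P2). lra.
Qed.

Lemma key gamma T I0 k F M w : (k < T)%nat -> (forall l, (l < T)%nat -> 0 <= gamma l) ->
  (forall w, Rabs (F w) <= M) ->
  ExpFrom gamma (T - k) k (fun w' => rfun (Iproc I0 (S k) w') + F w') w =
  ExpFrom gamma 1 k (fun w'' => rfun (Iproc I0 (S k) w'') + ExpFrom gamma (T - S k) (S k) F w'') w.
Proof.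
  intros Hk Hg HF. replace (T - k)%nat with (1 + (T - S k))%nat by lia. rewrite EF_split.
  apply EF_ext. intros w' _. rewrite Nat.add_1_r.
  rewrite (EF_plus gamma _ _ _ _ 1 M).
  - f_equal. rewrite (EF_ext gamma _ _ _ (fun _ => rfun (Iproc I0 (S k) w'))). apply EF_const.
    intros w'' Hw''. f_equal. apply Iproc_ext. intros i Hi. apply Hw''. lia.
  - intros i Hi; apply Hg; lia.
  - intro; apply rfun_bound.
  - exact HF.
Qed.

Lemma st_max T k tau : stopping_time_in T k tau -> (k < T)%nat ->
  stopping_time_in T (S k) (fun w => Nat.max (tau w) (S k)).
Proof.
  intros [H1 H2] Hk. split.
  - intro w. specialize (H1 w). lia.
  - intros j w w' Ha. destruct (le_lt_dec (S k) j).
    + specialize (H2 j w w' Ha). destruct H2 as [A B]. split; intro; [assert (tau w' <= j)%nat by (apply A; lia) | assert (tau w <= j)%nat by (apply B; lia)]; lia.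
    + split; intro; lia.
Qed.

Lemma st_const T : stopping_time_in T T (fun _ => T).
Proof. split. intro; lia. intros; tauto. Qed.

Definition tau0 gamma T I0 k (tau1 : Omega -> nat) : Omega -> nat :=
  fun w => if Rlt_dec 0 (Cfun gamma T k (Iproc I0 k w)) then tau1 w else k.

Lemma tau0_eq1 gamma T I0 k tau1 w : 0 < Cfun gamma T k (Iproc I0 k w) -> tau0 gamma T I0 k tau1 w = tau1 w.
Proof. intro H. unfold tau0. destruct (Rlt_dec _ _); [reflexivity|contradiction]. Qed.
Lemma tau0_eq2 gamma T I0 k tau1 w : ~ 0 < Cfun gamma T k (Iproc I0 k w) -> tau0 gamma T I0 k tau1 w = k.
Proof. intro H. unfold tau0. destruct (Rlt_dec _ _); [contradiction|reflexivity]. Qed.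

Lemma st_tau0 gamma T I0 k tau1 : (k < T)%nat -> stopping_time_in T (S k) tau1 ->
  stopping_time_in T k (tau0 gamma T I0 k tau1).
Proof.
  intros Hk [H1 H2]. split.
  - intro w. unfold tau0. destruct (Rlt_dec _ _); [specialize (H1 w)|]; lia.
  - intros j w w' Ha. destruct (le_lt_dec k j).
    + assert (E : Iproc I0 k w = Iproc I0 k w') by (apply Iproc_ext; intros; apply Ha; lia).
      unfold tau0. rewrite E. destruct (Rlt_dec _ _); [apply H2; auto| tauto].
    + unfold tau0. pose proof (H1 w); pose proof (H1 w').
      destruct (Rlt_dec 0 (Cfun gamma T k (Iproc I0 k w))), (Rlt_dec 0 (Cfun gamma T k (Iproc I0 k w'))); split; intro; lia.
Qed.

Lemma Qfun_T gamma T s : Qfun gamma T T s = 0.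
Proof. unfold Qfun. rewrite Nat.sub_diag. simpl. destruct (Req_EM_T s 1); reflexivity. Qed.

Lemma main gamma T I0 (HT : (0 < T)%nat) (Hg : forall l, (l < T)%nat -> 0 <= gamma l)
  (HI0 : I0 = 1 \/ I0 = -1) d : forall k, (k + d = T)%nat ->
  (forall tau, stopping_time_in T k tau -> forall w,
      ExpFrom gamma (T - k) k (payoff I0 T k tau) w <= Qfun gamma T k (Iproc I0 k w)) /\
  (exists tau, stopping_time_in T k tau /\ forall w,
      ExpFrom gamma (T - k) k (payoff I0 T k tau) w = Qfun gamma T k (Iproc I0 k w)).
Proof.
  induction d as [|d IH]; intros k Hkd.
  - assert (k = T) by lia. subst k. rewrite Nat.sub_diag. split.
    + intros tau [H1 _] w. simpl. rewrite payoff_zero, Qfun_T. lra. specialize (H1 w); lia.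
    + exists (fun _ => T). split. apply st_const. intro w. simpl. rewrite payoff_zero, Qfun_T. lra. lia.
  - assert (Hk : (k < T)%nat) by lia.
    destruct (IH (S k) ltac:(lia)) as [IHup [tau1 [Hst1 Heq1]]].
    set (MQ := fst (Qaux gamma T (T - S k)) + snd (Qaux gamma T (T - S k))).
    assert (HMQ : 0 <= MQ) by (pose proof (Qaux_pos gamma T (T - S k) HT Hg); unfold MQ; lra).
    assert (ONE : forall w, ExpFrom gamma 1 k (fun w'' => rfun (Iproc I0 (S k) w'') + Qfun gamma T (S k) (Iproc I0 (S k) w'')) w
                  = Cfun gamma T k (Iproc I0 k w)).
    { intro w. unfold Cfun. exact (onestep gamma I0 k (fun s => rfun s + Qfun gamma T (S k) s) w). }
    assert (HQr : forall w, Qfun gamma T k (Iproc I0 k w) = Rmax 0 (Cfun gamma T k (Iproc I0 k w))).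
    { intro w. apply Q_rec; auto. apply Iproc_pm; auto. }
    assert (Hagree : forall w w', agree_out k (T - k) w w' -> Iproc I0 k w' = Iproc I0 k w).
    { intros w w' H. apply Iproc_ext. intros i Hi. apply H. lia. }
    split.
    + intros tau Htau w. pose proof Htau as [Hr Hm].
      destruct (le_lt_dec (tau w) k) as [Hle|Hlt].
      * rewrite (EF_ext gamma _ _ _ (fun _ => 0)).
        { rewrite EF_const. apply Qfun_nonneg; auto. }
        intros w' Hw'. apply payoff_zero. apply (proj1 (Hm k w w' (fun i Hi => eq_sym (Hw' i (or_introl Hi))))). exact Hle.
      * set (tau' := fun w => Nat.max (tau w) (S k)).
        rewrite (EF_ext gamma _ _ _ (fun w' => rfun (Iproc I0 (S k) w') + payoff I0 T (S k) tau' w')).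
        2:{ intros w' Hw'.
            assert (Ht : (k < tau w')%nat).
            { destruct (le_lt_dec (tau w') k) as [Hc|Hc]; auto.
              apply (proj2 (Hm k w w' (fun i Hi => eq_sym (Hw' i (or_introl Hi))))) in Hc. lia. }
            rewrite payoff_step by lia. rewrite (payoff_tau_ext I0 T (S k) tau tau' w') by (unfold tau'; lia).
            unfold Defs.ind. destruct (Nat.leb_spec (S k) (tau w')); [ring|lia]. }
        rewrite (key gamma T I0 k _ (INR T)) by (auto; intro; apply payoff_bound).
        eapply Rle_trans. apply (EF_mono1 gamma k _ (fun w2 => rfun (Iproc I0 (S k) w2) + Qfun gamma T (S k) (Iproc I0 (S k) w2)) (1 + INR T + MQ)).
        -- apply Hg; lia.
        -- intro w''. eapply Rle_trans. apply Rabs_triang.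
           pose proof (rfun_bound (Iproc I0 (S k) w'')).
           assert (Rabs (ExpFrom gamma (T - S k) (S k) (payoff I0 T (S k) tau') w'') <= INR T).
           { apply EF_bound. intros i Hi; apply Hg; lia. intro; apply payoff_bound. }
           lra.
        -- intro w''. eapply Rle_trans. apply Rabs_triang.
           pose proof (rfun_bound (Iproc I0 (S k) w'')).
           pose proof (Qfun_bound gamma T (S k) (Iproc I0 (S k) w'') HT Hg). fold MQ in H0.
           pose proof (pos_INR T). lra.
        -- intro w''. apply Rplus_le_compat_l. apply IHup. apply st_max; auto.
        -- rewrite ONE, HQr. apply Rmax_r.
    + exists (tau0 gamma T I0 k tau1). split. apply st_tau0; auto.
      intro w. rewrite HQr.
      destruct (Rlt_dec 0 (Cfun gamma T k (Iproc I0 k w))) as [Hc|Hc].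
      * rewrite (EF_ext gamma _ _ _ (fun w' => rfun (Iproc I0 (S k) w') + payoff I0 T (S k) tau1 w')).
        2:{ intros w' Hw'. rewrite payoff_step by lia.
            assert (E : tau0 gamma T I0 k tau1 w' = tau1 w') by (apply tau0_eq1; rewrite (Hagree w w' Hw'); auto).
            rewrite (payoff_tau_ext I0 T (S k) _ tau1 w' E), E.
            destruct Hst1 as [H1 _]. specialize (H1 w').
            unfold Defs.ind. destruct (Nat.leb_spec (S k) (tau1 w')); [ring|lia]. }
        rewrite (key gamma T I0 k _ (INR T)) by (auto; intro; apply payoff_bound).
        rewrite (EF_ext gamma 1 k _ (fun w'' => rfun (Iproc I0 (S k) w'') + Qfun gamma T (S k) (Iproc I0 (S k) w''))).
        2:{ intros w'' _. rewrite Heq1. reflexivity. }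
        rewrite ONE, Rmax_right; lra.
      * rewrite (EF_ext gamma _ _ _ (fun _ => 0)).
        2:{ intros w' Hw'. apply payoff_zero. rewrite tau0_eq2. lia. rewrite (Hagree w w' Hw'); auto. }
        rewrite EF_const, Rmax_left; lra.
Qed.

Lemma cond_lemma gamma T k h X : (k <= T)%nat ->
  Expect gamma T (fun w => X w * atom k h w) =
  ExpFrom gamma (T - k) k X (fun i => if Nat.ltb i k then h i else 0%nat) *
  ExpFrom gamma k 0 (atom k h) (fun _ => 0%nat).
Proof.
  intro Hk. unfold Expect.
  assert (ES : forall f w0, ExpFrom gamma T 0 f w0 = ExpFrom gamma (k + (T - k)) 0 f w0)
    by (intros; f_equal; lia).
  rewrite ES, EF_split. cbn [Nat.add].
  rewrite <- EF_scal. apply EF_ext. intros w' Hw'.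
  rewrite (EF_ext gamma _ _ _ (fun w => atom k h w' * X w)).
  2:{ intros w'' Hw''. rewrite (atom_ext k h w'' w'). ring. intros i Hi. apply Hw''. lia. }
  rewrite EF_scal.
  destruct (Req_dec (atom k h w') 0) as [E|Hn]. rewrite E; ring.
  replace w' with (fun i => if Nat.ltb i k then h i else 0%nat); [ring|].
  extensionality i. destruct (Nat.ltb_spec i k).
  - symmetry. apply (atom_one k h w' Hn); auto.
  - rewrite Hw' by lia. reflexivity.
Qed.

Theorem lemma5p3 (T : nat) (gamma : nat -> R) (I0 : R) :
  (0 < T)%nat ->
  (forall l, (l < T)%nat -> 0 <= gamma l) ->
  (I0 = 1 \/ I0 = -1) ->
  (forall k, (k < T)%nat -> Qfun gamma T k (-1) > 0) /\
  (forall (k : nat) (h : Omega), (k <= T)%nat ->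
     Expect gamma T (atom k h) > 0 ->
     is_lub
       (fun q => exists tau, stopping_time_in T k tau /\
                   q = CondExp gamma T k (payoff I0 T k tau) h)
       (Qfun gamma T k (Iproc I0 k h))).
Proof.
  intros HT Hg HI0. split.
  - intros k Hk. rewrite Qfun_m1. replace (T - k)%nat with (S (T - S k)) by lia.
    apply Qaux_snd_pos; auto.
  - intros k h Hk HA.
    destruct (main gamma T I0 HT Hg HI0 (T - k) k ltac:(lia)) as [Hup [tau1 [Hst1 Heq1]]].
    set (hk := fun i => if Nat.ltb i k then h i else 0%nat).
    assert (EA : Expect gamma T (atom k h) = ExpFrom gamma k 0 (atom k h) (fun _ => 0%nat)).
    { transitivity (Expect gamma T (fun w => (fun _ => 1) w * atom k h w)).
      - unfold Expect. apply EF_ext. intros; ring.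
      - rewrite cond_lemma by auto. rewrite EF_const. ring. }
    assert (CE : forall X, CondExp gamma T k X h = ExpFrom gamma (T - k) k X hk).
    { intro X. unfold CondExp. rewrite cond_lemma by auto. rewrite EA. fold hk.
      rewrite EA in HA. field. lra. }
    assert (IE : Iproc I0 k hk = Iproc I0 k h).
    { apply Iproc_ext. intros i Hi. unfold hk. destruct (Nat.ltb_spec i k); [reflexivity|lia]. }
    split.
    + intros q [tau [Hst ->]]. rewrite CE, <- IE. apply Hup; auto.
    + intros b Hb. apply Hb. exists tau1. split; auto. rewrite CE, Heq1, IE. reflexivity.
Qed.
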